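(* Let $\mathcal G$ be an MMPG arena with leader $l$. If $\sigma^N$ is a Nash equilibrium, $\sigma^L$ is a leader equilibrium and $(\sigma^I,\gamma^I)$ is an incentive equilibrium of $\mathcal G$, then $$r_l(\sigma^N)\;\le\; r_l(\sigma^L)\;\le\; r_l(\sigma^I)-\sum_{p\in P\setminus\{l\}}\gamma^I_p(\sigma^I).$$ (Equivalently, Nash strategy profiles $\subseteq$ leader strategy profiles $\subseteq$ incentive strategy profiles, when strategy profiles are paired with the all-zero incentive profile.) Moreover, there exists an MMPG arena in which every Nash equilibrium gives the leader a strictly smaller raw payoff than every leader equilibrium, and every leader equilibrium gives the leader a strictly smaller payoff than every incentive equilibrium gives her as overall payoff.
   Context: A multi-player mean-payoff game (MMPG) arena is a tuple $\mathcal G=(P,V,(V_p)_{p\in P},v_0,E,(r_p)_{p\in P})$ where $P$ is a finite set of players containing a distinguished leader $l\in P$ (the other players are called followers), $V$ is a finite set of vertices with initial vertex $v_0\in V$, $(V_p)_{p\in P}$ is a partition of $V$ (player $p$ owns $V_p$), $E\subseteq V\times V$ is an edge set such that every vertex has at least one successor, and $r_p:E\to\mathbb Q$ is the reward function of player $p$. A history is a finite sequence $h=v_0v_1\dots v_n$ starting at $v_0$ with $(v_i,v_{i+1})\in E$ for all $i<n$; $\mathsf{last}(h)=v_n$. A play is an infinite such sequence. A strategy of player $p$ is a function $\sigma_p$ assigning to every history $h$ with $\mathsf{last}(h)\in V_p$ a vertex $v$ with $(\mathsf{last}(h),v)\in E$. A strategy profile $\sigma=(\sigma_p)_{p\in P}$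 determines a unique play $\pi_\sigma$. The raw payoff of player $p$ on a play $\pi=v_0v_1\dots$ is $r_p(\pi)=\liminf_{n\to\infty}\frac1n\sum_{i=0}^{n-1}r_p((v_i,v_{i+1}))$, and $r_p(\sigma):=r_p(\pi_\sigma)$. For a profile $\sigma$, a player $p$ and a strategy $\sigma'$ of $p$, $\sigma_{p,\sigma'}$ denotes the profile obtained from $\sigma$ by replacing $p$'s strategy with $\sigma'$. An incentive for a follower $p$ is a function $\gamma_p$ from histories to $\mathbb R_{\ge 0}$; its value on a play $\pi=v_0v_1\dots$ is $\gamma_p(\pi)=\liminf_{n\to\infty}\frac1n\sum_{i=1}^{n}\gamma_p(v_0\dots v_i)$, and $\gamma_p(\sigma):=\gamma_p(\pi_\sigma)$. An incentive profile is $\gamma=(\gamma_p)_{p\in P\setminus\{l\}}$. For a pair $(\sigma,\gamma)$, the overall payoff of a follower $p$ is $r_p(\sigma)+\gamma_p(\sigma)$ and the overall payoff of the leader is $r_l(\sigma)-\sum_{p\in P\setminus\{l\}}\gamma_p(\sigma)$. A strategy profile $\sigma$ is a Nash equilibrium if $r_p(\sigma)\ge r_p(\sigma_{p,\sigma'})$ for all players $p\in P$ and all strategies $\sigma'$ of $p$. It is a leader strategy profile if this holds for all followers $p\in P\setminus\{l\}$; a leader equilibrium is a leader strategy profile maximising $r_l$ among all leader strategy profiles. A pair $(\sigma,\gamma)$ is an incentive strategy profile (ISP) if for every follower $p$ and every strategy $\sigma'$ of $p$: $r_p(\sigma)+\gamma_p(\sigma)\ge r_p(\sigma_{p,\sigma'})+\gamma_p(\sigma_{p,\sigma'})$.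 An incentive equilibrium is an ISP whose leader overall payoff is maximal among all ISPs. *)

(* Defs.v *)
From Stdlib Require Import Reals QArith Qreals List ClassicalEpsilon.
Import ListNotations.
Open Scope R_scope.

(** * Extended reals (needed: incentive values may have liminf +oo) *)
Inductive ER : Type := Fin (r : R) | PInf | MInf.

Definition ER_le (x y : ER) : Prop :=
  match x, y with
  | MInf, _ => True
  | _, PInf => True
  | Fin a, Fin b => a <= b
  | _, _ => False
  end.

Definition ER_lt (x y : ER) : Prop := ER_le x y /\ x <> y.

(* addition; the undefined case +oo + -oo never arises below *)
Definition ER_add (x y : ER) : ER :=
  match x, y with
  | Fin a, Fin b => Fin (a + b)
  | PInf, MInf | MInf, PInf => Fin 0
  | PInf, _ | _, PInf => PInf
  | MInf, _ | _, MInf => MInf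
  end.

Definition ER_opp (x : ER) : ER :=
  match x with Fin a => Fin (- a) | PInf => MInf | MInf => PInf end.

Definition is_liminf (u : nat -> R) (x : ER) : Prop :=
  match x with
  | Fin l =>
      (forall eps, 0 < eps -> exists N, forall n, (N <= n)%nat -> l - eps < u n) /\
      (forall eps, 0 < eps -> forall N, exists n, (N <= n)%nat /\ u n < l + eps)
  | PInf => forall M, exists N, forall n, (N <= n)%nat -> M < u n
  | MInf => forall M N, exists n, (N <= n)%nat /\ u n < M
  end.

Definition Liminf (u : nat -> R) : ER :=
  epsilon (inhabits PInf) (is_liminf u).

Record arena : Type := {
  Pl : Type;
  Pl_eq_dec : forall p q : Pl, {p = q} + {p <> q};
  Pl_enum : list Pl;
  Pl_enum_nodup : NoDup Pl_enum;
  Pl_enum_full : forall p, In p Pl_enum;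
  leader : Pl;
  Vx : Type;
  Vx_enum : list Vx;
  Vx_enum_full : forall v, In v Vx_enum;
  owner : Vx -> Pl;
  v0 : Vx;
  Ed : Vx -> Vx -> Prop;
  Ed_total : forall v, exists w, Ed v w;
  reward : Pl -> Vx -> Vx -> Q                 (* r_p((v,w)), relevant on edges *)
}.

Section Game.
Variable G : arena.

Definition lastv (h : list (Vx G)) : Vx G := last h (v0 G).

Fixpoint is_path (v : Vx G) (t : list (Vx G)) : Prop :=
  match t with
  | [] => True
  | w :: t' => Ed G v w /\ is_path w t'
  end.

Definition is_history (h : list (Vx G)) : Prop :=
  match h with
  | [] => False
  | v :: t => v = v0 G /\ is_path v t
  end.

Definition strategy := list (Vx G) -> Vx G.
Definition profile := Pl G -> strategy.

Definition valid_strategy (p : Pl G) (s : strategy) : Prop :=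
  forall h, is_history h -> owner G (lastv h) = p -> Ed G (lastv h) (s h).

Definition valid_profile (sigma : profile) : Prop :=
  forall p, valid_strategy p (sigma p).

Definition upd (sigma : profile) (p : Pl G) (s : strategy) : profile :=
  fun q => if Pl_eq_dec G q p then s else sigma q.

Fixpoint hist (sigma : profile) (n : nat) : list (Vx G) :=
  match n with
  | O => [v0 G]
  | S k => let h := hist sigma k in h ++ [sigma (owner G (lastv h)) h]
  end.

Definition play (sigma : profile) (n : nat) : Vx G := lastv (hist sigma n).

Fixpoint sumR (f : nat -> R) (n : nat) : R :=
  match n with O => 0 | S k => sumR f k + f k end.

Definition raw (p : Pl G) (sigma : profile) : ER :=
  Liminf (fun n => sumR (fun i => Q2R (reward G p (play sigma i) (play sigma (S i)))) n
                    / INR n).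

Definition incentive := list (Vx G) -> R.
Definition incprofile := Pl G -> incentive.  (* leader's component is ignored *)

Definition valid_incentive (g : incentive) : Prop :=
  forall h, is_history h -> 0 <= g h.

Definition valid_incprofile (gamma : incprofile) : Prop :=
  forall p, p <> leader G -> valid_incentive (gamma p).

Definition incval (g : incentive) (sigma : profile) : ER :=
  Liminf (fun n => sumR (fun i => g (hist sigma (S i))) n / INR n).

Definition sum_followers (f : Pl G -> ER) : ER :=
  fold_right (fun p acc => if Pl_eq_dec G p (leader G) then acc else ER_add (f p) acc)
             (Fin 0) (Pl_enum G).

Definition overall_follower (p : Pl G) (sigma : profile) (gamma : incprofile) : ER :=
  ER_add (raw p sigma) (incval (gamma p) sigma).

Definition overall_leader (sigma : profile) (gamma : incprofile) : ER :=
  ER_add (raw (leader G) sigma)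
         (ER_opp (sum_followers (fun p => incval (gamma p) sigma))).

Definition nash (sigma : profile) : Prop :=
  valid_profile sigma /\
  forall p s, valid_strategy p s -> ER_le (raw p (upd sigma p s)) (raw p sigma).

Definition leader_sp (sigma : profile) : Prop :=
  valid_profile sigma /\
  forall p s, p <> leader G -> valid_strategy p s ->
    ER_le (raw p (upd sigma p s)) (raw p sigma).

Definition leader_eq (sigma : profile) : Prop :=
  leader_sp sigma /\
  forall sigma', leader_sp sigma' -> ER_le (raw (leader G) sigma') (raw (leader G) sigma).

Definition isp (sigma : profile) (gamma : incprofile) : Prop :=
  valid_profile sigma /\ valid_incprofile gamma /\
  forall p s, p <> leader G -> valid_strategy p s ->
    ER_le (overall_follower p (upd sigma p s) gamma) (overall_follower p sigma gamma).

Definition incentive_eq (sigma : profile) (gamma : incprofile) : Prop :=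
  isp sigma gamma /\
  forall sigma' gamma', isp sigma' gamma' ->
    ER_le (overall_leader sigma' gamma') (overall_leader sigma gamma).

End Game.

(* Main.v *)
Require Import Defs.
From Stdlib Require Import Reals QArith Qreals List ClassicalEpsilon Lra Lia.
From Coquelicot Require Import Coquelicot.
Import ListNotations.
Open Scope R_scope.

Definition toRbar (x : ER) : Rbar :=
  match x with Fin r => Finite r | PInf => p_infty | MInf => m_infty end.

Lemma is_liminf_equiv u x : is_liminf u x <-> is_LimInf_seq u (toRbar x).
Proof.
  destruct x as [l| |]; simpl; try tauto.
  split.
  - intros [H1 H2] eps. split.
    + intros N. apply (H2 eps (cond_pos eps) N).
    + apply (H1 eps (cond_pos eps)).
  - intros H. split.
    + intros eps Heps. apply (proj2 (H (mkposreal eps Heps))).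
    + intros eps Heps. apply (proj1 (H (mkposreal eps Heps))).
Qed.

Lemma Liminf_spec u : is_liminf u (Liminf u).
Proof.
  unfold Liminf. apply epsilon_spec.
  destruct (ex_LimInf_seq u) as [l Hl].
  destruct l as [r| |].
  - exists (Fin r). apply is_liminf_equiv. exact Hl.
  - exists PInf. apply is_liminf_equiv. exact Hl.
  - exists MInf. apply is_liminf_equiv. exact Hl.
Qed.

Lemma Liminf_unique u x : is_liminf u x -> Liminf u = x.
Proof.
  intros H. pose proof (Liminf_spec u) as H2.
  apply is_liminf_equiv, is_LimInf_seq_unique in H.
  apply is_liminf_equiv, is_LimInf_seq_unique in H2.
  rewrite H in H2.
  destruct x, (Liminf u); simpl in H2; try discriminate; try reflexivity.
  injection H2; intros ->; reflexivity.
Qed.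

Lemma sumR_ev (a : nat -> R) c : (forall i, (1 <= i)%nat -> a i = c) ->
  forall n, (1 <= n)%nat -> sumR a n = a O + INR (n - 1) * c.
Proof.
  intros Ha n Hn. induction n as [|n IH]; [lia|].
  destruct n as [|n].
  - simpl. lra.
  - replace (sumR a (S (S n))) with (sumR a (S n) + a (S n)) by reflexivity.
    rewrite IH by lia. rewrite (Ha (S n)) by lia.
    replace (S (S n) - 1)%nat with (S (S n - 1))%nat by lia.
    rewrite S_INR. lra.
Qed.

Lemma avg_lim (a : nat -> R) c : (forall i, (1 <= i)%nat -> a i = c) ->
  Liminf (fun n => sumR a n / INR n) = Fin c.
Proof.
  intros Ha. apply Liminf_unique. apply is_liminf_equiv.
  apply (is_lim_LimInf_seq _ (Finite c)).
  apply is_lim_seq_ext_loc with (u := fun n => c + (a O - c) * / INR n).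
  - exists 1%nat. intros n Hn. rewrite (sumR_ev a c Ha n Hn).
    assert (0 < INR n) by (apply lt_0_INR; lia).
    rewrite minus_INR by lia. simpl. field. lra.
  - replace (Finite c) with (Finite (c + (a O - c) * 0)) by (f_equal; ring).
    apply is_lim_seq_plus'. apply is_lim_seq_const.
    apply (is_lim_seq_scal_l (fun n => / INR n) (a O - c) 0).
    replace (Finite 0) with (Rbar_inv p_infty) by reflexivity.
    apply is_lim_seq_inv. apply is_lim_seq_INR. discriminate.
Qed.

Lemma Liminf_nonneg u : (forall n, 0 <= u n) -> ER_le (Fin 0) (Liminf u).
Proof.
  intros Hu. pose proof (Liminf_spec u) as H.
  destruct (Liminf u) as [l| |]; simpl in *; auto.
  - destruct (Rle_dec 0 l) as [|Hl]; auto. exfalso.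
    destruct H as [_ H2]. destruct (H2 (-l) ltac:(lra) O) as [n [_ Hn]].
    specialize (Hu n). lra.
  - destruct (H 0 O) as [n [_ Hn]]. specialize (Hu n). lra.
Qed.

Section Gen.
Variable G : arena.

Lemma last_cons_cons (x y : Vx G) t d : last (x :: y :: t) d = last (y :: t) d.
Proof. reflexivity. Qed.

Lemma last_dflt (x : Vx G) t d1 d2 : last (x :: t) d1 = last (x :: t) d2.
Proof.
  revert x. induction t as [|y t IH]; intros x; [reflexivity|].
  change (last (y :: t) d1 = last (y :: t) d2). apply IH.
Qed.

Lemma is_path_app v t w : is_path G v t -> Ed G (last (v :: t) v) w -> is_path G v (t ++ [w]).
Proof.
  revert v. induction t as [|x t IH]; intros v Hp He.
  - simpl in *. split; auto.
  - destruct Hp as [Hvx Hp]. simpl. split; auto. apply IH; auto.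
    change (Ed G (last (x :: t) v) w) in He. rewrite (last_dflt x t v x) in He. exact He.
Qed.

Lemma hist_cons sigma n : exists t, hist G sigma n = v0 G :: t.
Proof.
  induction n as [|n [t IH]]; simpl.
  - exists []. reflexivity.
  - rewrite IH. eexists. reflexivity.
Qed.

Lemma play_S sigma n : play G sigma (S n) = sigma (owner G (play G sigma n)) (hist G sigma n).
Proof. unfold play, lastv. simpl. apply last_last. Qed.

Lemma play_0 sigma : play G sigma 0 = v0 G.
Proof. reflexivity. Qed.

Lemma hist_history sigma : valid_profile G sigma -> forall n,
  is_history G (hist G sigma n) /\ Ed G (play G sigma n) (play G sigma (S n)).
Proof.
  intros Hv n. induction n as [|n [IH _]].
  - split. { simpl. split; auto. }
    rewrite play_S. apply Hv; [simpl; split; auto; exact I | reflexivity].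
  - assert (Hh : is_history G (hist G sigma (S n))).
    { simpl. destruct (hist_cons sigma n) as [t Ht]. rewrite Ht in *.
      destruct IH as [Hv0 Hp]. simpl. split; auto.
      apply is_path_app; auto.
      apply (Hv (owner G (lastv G (v0 G :: t))) (v0 G :: t)).
      + split; auto.
      + reflexivity.
      }
    split; auto.
    rewrite (play_S sigma (S n)). apply Hv; auto.
Qed.

Lemma upd_valid sigma p s : valid_profile G sigma -> valid_strategy G p s ->
  valid_profile G (upd G sigma p s).
Proof.
  intros Hv Hs q. unfold upd. destruct (Pl_eq_dec G q p); subst; auto.
Qed.

Lemma incval_nonneg g sigma : valid_profile G sigma -> valid_incentive G g ->
  ER_le (Fin 0) (incval G g sigma).
Proof.
  intros Hv Hg. apply Liminf_nonneg. intros n.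
  destruct n as [|n]. simpl. unfold Rdiv. rewrite Rmult_0_l. lra.
  apply Rmult_le_pos.
  - clear -Hv Hg. induction (S n) as [|k IH]; cbn [sumR]; [lra|].
    pose proof (Hg _ (proj1 (hist_history sigma Hv (S k)))). lra.
  - left. apply Rinv_0_lt_compat. apply lt_0_INR. lia.
Qed.

End Gen.

Inductive P5 := PL | PF.
Inductive V5 := V0 | VU | S0 | S1 | S2.
Definition P5_eq_dec (p q : P5) : {p = q} + {p <> q}.
Proof. decide equality. Defined.
Definition Ed5 (v w : V5) : Prop :=
  match v, w with
  | V0, S0 | V0, VU | VU, S1 | VU, S2 | S0, S0 | S1, S1 | S2, S2 => True
  | _, _ => False end.
Definition rw (p : P5) (w : V5) : Q :=
  match p, w with
  | PL, S1 => 1 | PL, S2 => 3 | PF, S0 => 1 | PF, S1 => 2 | _, _ => 0 end%Q.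
Definition owner5 (v : V5) : P5 := match v with V0 => PF | _ => PL end.

Lemma P5_nodup : NoDup [PL; PF].
Proof. repeat constructor; simpl; intuition discriminate. Qed.
Lemma P5_full : forall p, In p [PL; PF].
Proof. destruct p; simpl; auto. Qed.
Lemma V5_full : forall v, In v [V0; VU; S0; S1; S2].
Proof. destruct v; simpl; auto 6. Qed.
Lemma Ed5_total : forall v, exists w, Ed5 v w.
Proof. destruct v; [exists S0|exists S1|exists S0|exists S1|exists S2]; exact I. Qed.

Definition G5 : arena := {|
  Pl := P5; Pl_eq_dec := P5_eq_dec; Pl_enum := [PL; PF];
  Pl_enum_nodup := P5_nodup; Pl_enum_full := P5_full; leader := PL;
  Vx := V5; Vx_enum := [V0; VU; S0; S1; S2]; Vx_enum_full := V5_full;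
  owner := owner5; v0 := V0; Ed := Ed5; Ed_total := Ed5_total;
  reward := fun p _ w => rw p w |}.

Definition outc (a b : V5) : V5 := match a with VU => b | _ => S0 end.
Definition out (s : profile G5) : V5 := outc (s PF [V0]) (s PL [V0; VU]).

Lemma choices (s : profile G5) : valid_profile G5 s ->
  (s PF [V0] = S0 \/ s PF [V0] = VU) /\ (s PL [V0; VU] = S1 \/ s PL [V0; VU] = S2).
Proof.
  intros Hv. split.
  - pose proof (Hv PF [V0] (conj eq_refl I) eq_refl) as H.
    simpl in H. destruct (s PF [V0]); simpl in H; tauto.
  - pose proof (Hv PL [V0; VU] (conj eq_refl (conj I I)) eq_refl) as H.
    simpl in H. destruct (s PL [V0; VU]); simpl in H; tauto.
Qed.

Lemma sink_edge v w : Ed5 v w -> (v = S0 \/ v = S1 \/ v = S2) -> w = v.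
Proof. destruct v, w; simpl; intuition discriminate. Qed.

Lemma play_out (s : profile G5) : valid_profile G5 s ->
  forall i, (1 <= i)%nat -> play G5 s (S i) = out s.
Proof.
  intros Hv i Hi. destruct (choices s Hv) as [Ha Hb].
  assert (H1 : play G5 s 1 = s PF [V0]) by reflexivity.
  assert (Hs : out s = S0 \/ out s = S1 \/ out s = S2).
  { unfold out. destruct Ha as [-> | ->]; simpl; intuition. }
  assert (H2 : play G5 s 2 = out s).
  { destruct Ha as [Ha|Ha].
    - pose proof (proj2 (hist_history G5 s Hv 1)) as E. rewrite H1, Ha in E.
      unfold out. rewrite Ha. simpl. apply (sink_edge _ _ E). auto.
    - rewrite play_S, H1, Ha. unfold out. rewrite Ha. simpl.
      change (hist G5 s 1) with ([V0] ++ [s PF [V0]]). rewrite Ha. reflexivity. }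
  induction i as [|i IH]; [lia|].
  destruct i as [|i]; [exact H2|].
  pose proof (proj2 (hist_history G5 s Hv (S (S i)))) as E.
  rewrite IH in E by lia. apply (sink_edge _ _ E Hs).
Qed.

Definition rv (p : P5) (w : V5) : R := Q2R (rw p w).

Lemma raw5 (s : profile G5) p : valid_profile G5 s -> raw G5 p s = Fin (rv p (out s)).
Proof.
  intros Hv. unfold raw. apply avg_lim. intros i Hi. cbn [reward G5].
  rewrite (play_out s Hv i Hi). reflexivity.
Qed.

Lemma inc5 (s : profile G5) (f : V5 -> R) : valid_profile G5 s ->
  incval G5 (fun h => f (lastv G5 h)) s = Fin (f (out s)).
Proof.
  intros Hv. unfold incval. apply avg_lim. intros i Hi.
  change (f (play G5 s (S i)) = f (out s)). rewrite (play_out s Hv i Hi). reflexivity.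
Qed.

Lemma rv_vals : rv PL S0 = 0 /\ rv PL S1 = 1 /\ rv PL S2 = 3 /\
  rv PF S0 = 1 /\ rv PF S1 = 2 /\ rv PF S2 = 0.
Proof. unfold rv, Q2R; simpl; repeat split; field. Qed.

Definition succ (c1 c2 v : V5) : V5 := match v with V0 => c1 | VU => c2 | x => x end.
Definition st (c1 c2 : V5) : strategy G5 := fun h => succ c1 c2 (lastv G5 h).
Definition mk (c1 c2 : V5) : profile G5 := fun _ => st c1 c2.

Lemma st_valid c1 c2 p : (c1 = S0 \/ c1 = VU) -> (c2 = S1 \/ c2 = S2) ->
  valid_strategy G5 p (st c1 c2).
Proof.
  intros H1 H2 h _ _. unfold st. destruct (lastv G5 h); simpl;
  [destruct H1 as [->| ->]|destruct H2 as [->| ->]| | |]; exact I.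
Qed.

Lemma mk_valid c1 c2 : (c1 = S0 \/ c1 = VU) -> (c2 = S1 \/ c2 = S2) ->
  valid_profile G5 (mk c1 c2).
Proof. intros H1 H2 p. apply st_valid; auto. Qed.

Lemma out_mk c1 c2 : out (mk c1 c2) = outc c1 c2.
Proof. reflexivity. Qed.
Lemma out_updF s t : out (upd G5 s PF t) = outc (t [V0]) (s PL [V0; VU]).
Proof. reflexivity. Qed.
Lemma out_updL s t : out (upd G5 s PL t) = outc (s PF [V0]) (t [V0; VU]).
Proof. reflexivity. Qed.

Lemma nash_bound s : nash G5 s -> raw G5 PL s = Fin 0.
Proof.
  intros [Hv Hd]. pose proof rv_vals as RV.
  rewrite (raw5 s PL Hv). destruct (choices s Hv) as [[Ha|Ha] [Hb|Hb]]; unfold out;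
  rewrite ?Ha, ?Hb; simpl; try (f_equal; tauto).
  - exfalso. pose proof (Hd PL (st S0 S2) (st_valid _ _ _ (or_introl eq_refl) (or_intror eq_refl))) as H.
    rewrite (raw5 _ _ (upd_valid _ _ _ _ Hv (st_valid _ _ _ (or_introl eq_refl) (or_intror eq_refl)))),
      (raw5 _ _ Hv), out_updL in H. unfold out in H. rewrite Ha, Hb in H. unfold st, succ, lastv in H; simpl in H. destruct RV as (r1&r2&r3&r4&r5&r6). rewrite ?r1, ?r2, ?r3, ?r4, ?r5, ?r6 in H. lra.
  - exfalso. pose proof (Hd PF (st S0 S1) (st_valid _ _ _ (or_introl eq_refl) (or_introl eq_refl))) as H.
    rewrite (raw5 _ _ (upd_valid _ _ _ _ Hv (st_valid _ _ _ (or_introl eq_refl) (or_introl eq_refl)))),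
      (raw5 _ _ Hv), out_updF in H. unfold out in H. rewrite Ha, Hb in H. unfold st, succ, lastv in H; simpl in H. destruct RV as (r1&r2&r3&r4&r5&r6). rewrite ?r1, ?r2, ?r3, ?r4, ?r5, ?r6 in H. lra.
Qed.

Ltac rvs H := let RV := fresh in pose proof rv_vals as RV;
  destruct RV as (r1&r2&r3&r4&r5&r6); rewrite ?r1, ?r2, ?r3, ?r4, ?r5, ?r6 in H.

Lemma lsp_bound s : leader_sp G5 s -> exists r, raw G5 PL s = Fin r /\ r <= 1.
Proof.
  intros [Hv Hd].
  rewrite (raw5 s PL Hv). destruct (choices s Hv) as [[Ha|Ha] [Hb|Hb]]; unfold out;
  rewrite ?Ha, ?Hb; simpl.
  - exists 0. split; [f_equal; apply rv_vals|lra].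
  - exists 0. split; [f_equal; apply rv_vals|lra].
  - exists 1. split; [f_equal; apply rv_vals|lra].
  - exfalso. pose proof (Hd PF (st S0 S1) ltac:(discriminate) (st_valid _ _ _ (or_introl eq_refl) (or_introl eq_refl))) as H.
    rewrite (raw5 _ _ (upd_valid _ _ _ _ Hv (st_valid _ _ _ (or_introl eq_refl) (or_introl eq_refl)))),
      (raw5 _ _ Hv), out_updF in H. unfold out in H. rewrite Ha, Hb in H.
    unfold st, succ, lastv in H; simpl in H. rvs H. lra.
Qed.

Definition sL := mk VU S1.
Lemma lsp_wit : leader_sp G5 sL.
Proof.
  split. { apply mk_valid; auto. }
  intros p t Hp Ht. destruct p; [exfalso; apply Hp; reflexivity|].
  pose proof (choices _ (upd_valid _ _ _ _ (mk_valid VU S1 (or_intror eq_refl) (or_introl eq_refl)) Ht)) as [Hc _].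
  rewrite (raw5 _ _ (upd_valid _ _ _ _ (mk_valid VU S1 (or_intror eq_refl) (or_introl eq_refl)) Ht)),
     (raw5 _ _ (mk_valid VU S1 (or_intror eq_refl) (or_introl eq_refl))).
  rewrite out_updF, out_mk. assert (Hc' : t [V0] = S0 \/ t [V0] = VU) by exact Hc. clear Hc. rename Hc' into Hc.
  destruct Hc as [Hc|Hc]; rewrite Hc; unfold mk, st, succ, lastv; simpl;
  pose proof rv_vals as (r1&r2&r3&r4&r5&r6); lra.
Qed.

Lemma sum5 f : sum_followers G5 f = ER_add (f PF) (Fin 0).
Proof. reflexivity. Qed.

Lemma isp_bound s g : isp G5 s g -> ER_le (overall_leader G5 s g) (Fin 2).
Proof.
  intros [Hv [Hg Hd]]. unfold overall_leader. rewrite sum5. cbn beta. change (leader G5) with PL.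
  assert (HgF : valid_incentive G5 (g PF)) by (apply Hg; discriminate).
  pose proof (incval_nonneg G5 (g PF) s Hv HgF) as Hx.
  destruct (incval G5 (g PF) s) as [b| |] eqn:Eb; simpl in Hx; try contradiction.
  2:{ rewrite (raw5 s PL Hv). exact I. }
  rewrite (raw5 s PL Hv). simpl.
  destruct (choices s Hv) as [[Ha|Ha] [Hb|Hb]]; unfold out; rewrite ?Ha, ?Hb; simpl;
    pose proof rv_vals as (r1&r2&r3&r4&r5&r6); try lra.
  pose proof (st_valid S0 S1 PF (or_introl eq_refl) (or_introl eq_refl)) as Ht.
  pose proof (Hd PF (st S0 S1) ltac:(discriminate) Ht) as H.
  unfold overall_follower in H.
  pose proof (incval_nonneg G5 (g PF) _ (upd_valid _ _ _ _ Hv Ht) HgF) as Hy.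
  rewrite (raw5 _ _ (upd_valid _ _ _ _ Hv Ht)), (raw5 _ _ Hv), out_updF, Eb in H.
  unfold out in H. rewrite Ha, Hb in H. change (st S0 S1 [V0]) with S0 in H. simpl in H.
  destruct (incval G5 (g PF) (upd G5 s PF (st S0 S1))) as [a| |]; simpl in Hy, H;
    try contradiction. rewrite r4, r6 in H. lra.
Qed.

Definition fI (v : V5) : R := match v with S2 => 1 | _ => 0 end.
Definition sI := mk VU S2.
Definition gI : incprofile G5 := fun _ h => fI (lastv G5 h).

Lemma sI_valid : valid_profile G5 sI.
Proof. apply mk_valid; auto. Qed.

Lemma isp_wit : isp G5 sI gI /\ overall_leader G5 sI gI = Fin 2.
Proof.
  split.
  - split; [exact sI_valid|]. split.
    + intros p _ h _. unfold gI, fI. destruct (lastv G5 h); lra.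
    + intros p t Hp Ht. destruct p; [exfalso; apply Hp; reflexivity|].
      pose proof (upd_valid _ _ _ _ sI_valid Ht) as Hu.
      pose proof (choices _ Hu) as [Hc _].
      unfold overall_follower, gI.
      rewrite (raw5 _ _ Hu), (raw5 _ _ sI_valid), (inc5 _ fI Hu), (inc5 _ fI sI_valid).
      rewrite out_updF. change (out sI) with S2. change (sI PL [V0; VU]) with S2. assert (Hc' : t [V0] = S0 \/ t [V0] = VU) by exact Hc. clear Hc. rename Hc' into Hc.
      destruct Hc as [Hc|Hc]; rewrite Hc; unfold sI, mk, st, succ, fI, lastv; simpl;
      pose proof rv_vals as (r1&r2&r3&r4&r5&r6); lra.
  - unfold overall_leader. rewrite sum5. unfold gI.
    rewrite (raw5 _ _ sI_valid), (inc5 _ fI sI_valid). simpl.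
    pose proof rv_vals as (r1&r2&r3&r4&r5&r6). f_equal. change (out sI) with S2. lra.
Qed.

Definition sN := mk S0 S2.
Lemma nash_wit : nash G5 sN.
Proof.
  assert (Hv : valid_profile G5 sN) by (apply mk_valid; auto).
  split; [exact Hv|]. intros p t Ht.
  pose proof (upd_valid _ _ _ _ Hv Ht) as Hu.
  rewrite (raw5 _ _ Hu), (raw5 _ _ Hv). change (out sN) with S0.
  pose proof rv_vals as (r1&r2&r3&r4&r5&r6).
  destruct p.
  - rewrite out_updL. change (sN PF [V0]) with S0. simpl. lra.
  - pose proof (choices _ Hu) as [Hc _].
    assert (Hc' : t [V0] = S0 \/ t [V0] = VU) by exact Hc. clear Hc.
    rewrite out_updF. change (sN PL [V0; VU]) with S2.
    destruct Hc' as [Hc|Hc]; rewrite Hc; simpl; lra.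
Qed.

Lemma ER_add_0 x : ER_add x (Fin 0) = x.
Proof. destruct x; simpl; auto. f_equal; ring. Qed.

Lemma incval_zero (G : arena) (s : profile G) : incval G (fun _ => 0) s = Fin 0.
Proof. unfold incval. apply (avg_lim _ 0). intros; reflexivity. Qed.

Lemma sum_zero (G : arena) (s : profile G) :
  sum_followers G (fun p => incval G ((fun _ _ => 0) p) s) = Fin 0.
Proof.
  unfold sum_followers. induction (Pl_enum G) as [|p l IH]; simpl; auto.
  destruct (Pl_eq_dec G p (leader G)); auto. rewrite IH, incval_zero. simpl. f_equal; ring.
Qed.

Lemma part2 (G : arena) (s : profile G) : leader_sp G s -> isp G s (fun _ _ => 0%R).
Proof.
  intros [Hv Hd]. split; [exact Hv|]. split.
  - intros p _ h _. lra.
  - intros p t Hp Ht. unfold overall_follower. cbn beta. rewrite !incval_zero, !ER_add_0.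
    apply Hd; auto.
Qed.

Lemma overall_zero (G : arena) (s : profile G) :
  overall_leader G s (fun _ _ => 0%R) = raw G (leader G) s.
Proof. unfold overall_leader. rewrite sum_zero. simpl. rewrite Ropp_0. apply ER_add_0. Qed.

Theorem theorem1 :
  (forall (G : arena) (s : profile G), nash G s -> leader_sp G s) /\
  (forall (G : arena) (s : profile G), leader_sp G s -> isp G s (fun _ _ => 0%R)) /\
  (forall (G : arena) (sN sL sI : profile G) (gI : incprofile G),
      nash G sN -> leader_eq G sL -> incentive_eq G sI gI ->
      ER_le (raw G (leader G) sN) (raw G (leader G) sL) /\
      ER_le (raw G (leader G) sL) (overall_leader G sI gI)) /\
  (exists G : arena,
      (exists s, nash G s) /\ (exists s, leader_eq G s) /\
      (exists s g, incentive_eq G s g) /\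
      (forall sN sL, nash G sN -> leader_eq G sL ->
         ER_lt (raw G (leader G) sN) (raw G (leader G) sL)) /\
      (forall sL sI gI, leader_eq G sL -> incentive_eq G sI gI ->
         ER_lt (raw G (leader G) sL) (overall_leader G sI gI))).
Proof.
  assert (P1 : forall (G : arena) (s : profile G), nash G s -> leader_sp G s).
  { intros G s [Hv Hd]. split; auto. }
  split; [exact P1|]. split; [exact part2|]. split.
  { intros G sN0 sL0 sI0 gI0 HN [HL HLm] [HI HIm]. split.
    - apply HLm, P1, HN.
    - rewrite <- overall_zero. apply HIm, part2, HL. }
  assert (Hsl : leader_eq G5 sL).
  { split; [exact lsp_wit|]. intros s' Hs'. change (leader G5) with PL.
    destruct (lsp_bound _ Hs') as [r [-> Hr]].
    rewrite (raw5 _ _ (proj1 lsp_wit)). change (out sL) with S1.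
    pose proof rv_vals as (r1&r2&r3&r4&r5&r6). simpl. lra. }
  assert (Hsi : incentive_eq G5 sI gI).
  { split; [exact (proj1 isp_wit)|]. intros s' g' Hs'. rewrite (proj2 isp_wit).
    apply isp_bound, Hs'. }
  exists G5. split; [exists sN; exact nash_wit|]. split; [exists sL; exact Hsl|].
  split; [exists sI, gI; exact Hsi|]. split.
  - intros s1 s2 H1 [H2 H2m]. change (leader G5) with PL.
    rewrite (nash_bound _ H1).
    pose proof (H2m sL lsp_wit) as H. change (leader G5) with PL in H.
    rewrite (raw5 _ _ (proj1 lsp_wit)) in H. change (out sL) with S1 in H.
    rewrite (raw5 _ _ (proj1 H2)) in H |- *.
    pose proof rv_vals as (r1&r2&r3&r4&r5&r6). simpl in H. rewrite r2 in H.
    split; simpl; [lra|]. intros E; injection E; lra.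
  - intros s1 s2 g2 [H1 _] [H2 H2m]. change (leader G5) with PL.
    destruct (lsp_bound _ H1) as [r [-> Hr]].
    pose proof (H2m sI gI (proj1 isp_wit)) as H. rewrite (proj2 isp_wit) in H.
    destruct (overall_leader G5 s2 g2) as [c| |]; simpl in H; try contradiction.
    + split; simpl; [lra|]. intros E; injection E; lra.
    + split; simpl; auto. discriminate.
Qed.
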